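(* Let $I$ be a finite set, $n\in\{1,\dots,|I|\}$, and $\bar J_n$ a set of $n$-element subsets of $I$. Samples are bit strings $o=(o_i)_{i\in I}\in\{0,1\}^I$; a set $j\in\bar J_n$ is activated by $o$ if $o_i=1$ for all $i\in j$. For $F\subset\bar J_n$ let $\mathbb 1_F:\{0,1\}^I\to\{0,1\}$ be given by $\mathbb 1_F(o)=1$ iff some $j\in F$ is activated by $o$, and let $\mathcal H:=\{\mathbb 1_F: F\subset\bar J_n\}$. Then the Vapnik–Chervonenkis dimension of $\mathcal H$ is $\operatorname{VCdim}(\mathcal H)=|\bar J_n|$.
   Context: The VC-dimension of a class of $\{0,1\}$-valued functions is the largest cardinality of a set of points on which the class realizes all possible labelings (that it shatters). *)

(* Defs.v *)
From mathcomp Require Import all_boot.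
Set Implicit Arguments. Unset Strict Implicit. Unset Printing Implicit Defensive.

Definition shatters (X : finType) (H : (X -> bool) -> Prop) (S : {set X}) : Prop :=
  forall lab : X -> bool, exists h, H h /\ forall x, x \in S -> h x = lab x.

Definition VCdim_eq (X : finType) (H : (X -> bool) -> Prop) (d : nat) : Prop :=
  (exists S : {set X}, shatters H S /\ #|S| = d) /\
  (forall S : {set X}, shatters H S -> #|S| <= d).

Definition sample (I : finType) := {ffun I -> bool}.

Definition activated (I : finType) (o : sample I) (j : {set I}) : bool :=
  [forall i in j, o i].

Definition ind (I : finType) (F : {set {set I}}) (o : sample I) : bool :=
  [exists j in F, activated o j].

Definition Hclass (I : finType) (Jn : {set {set I}}) (h : sample I -> bool) : Prop :=
  exists F : {set {set I}}, F \subset Jn /\ forall o, h o = ind F o.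

(* Main.v *)
Require Import Defs.
From mathcomp Require Import all_boot.

Theorem proposition14 (I : finType) (n : nat) (Jn : {set {set I}})
  (hn1 : 1 <= n) (hnI : n <= #|I|)
  (hJ : forall j, j \in Jn -> #|j| = n) :
  VCdim_eq (Hclass Jn) #|Jn|.
Proof.
split.
- pose o (j : {set I}) : sample I := [ffun i => i \in j].
  have oinj : injective o.
    move=> a b /ffunP E; apply/setP => i; have := E i; by rewrite !ffunE.
  exists (o @: Jn); split; last by rewrite card_imset.
  move=> lab; exists (ind [set j in Jn | lab (o j)]); split.
    by exists [set j in Jn | lab (o j)]; split => //; apply/subsetP => j; rewrite inE => /andP[].
  move=> x /imsetP [k kJ ->].
  apply/idP/idP.
    case/existsP => j /andP [] ; rewrite inE => /andP [jJ lj] /forallP act.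
    have jk : j \subset k.
      apply/subsetP => i ij; have := act i; rewrite ij /= ffunE; by [].
    have : j == k by rewrite eqEcard jk (hJ _ jJ) (hJ _ kJ) leqnn.
    by move/eqP => <-.
  move=> lk; apply/existsP; exists k; rewrite inE kJ lk /=.
  by apply/forallP => i; apply/implyP => ik; rewrite ffunE.
- move=> S sh.
  pose P (A : {set sample I}) (F : {set {set I}}) := (F \subset Jn) && [forall x in S, ind F x == (x \in A)].
  pose f A := odflt set0 [pick F | P A F].
  have fP : forall A, P A (f A).
    move=> A; rewrite /f; case: pickP => [F //|none].
    have [h [[F [FJ hF]] hl]] := sh (fun x => x \in A).
    have := none F; rewrite /P FJ /=; move/negbT/negP; case.
    by apply/forallP => x; apply/implyP => xS; rewrite -hF hl.
  have finj : {in powerset S &, injective f}.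
    move=> A B; rewrite !inE => AS BS eq.
    have /andP [_ /forallP HA] := fP A; have /andP [_ /forallP HB] := fP B.
    apply/setP => x; case xS: (x \in S).
      have := HA x; have := HB x; rewrite xS eq /= => /eqP -> /eqP -> //.
    apply/idP/idP => H.
      by move: (subsetP AS x H); rewrite xS.
    by move: (subsetP BS x H); rewrite xS.
  have : #|f @: powerset S| <= #|powerset Jn|.
    apply: subset_leq_card; apply/subsetP => F /imsetP [A _ ->].
    by rewrite inE; case/andP: (fP A).
  by rewrite card_in_imset // !card_powerset leq_exp2l.
Qed.
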